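(* Let $c_0>0$, $T>0$, and let $(\hat u,\hat v)$ be a smooth solution of the NLDE on $\mathbb{R}\times[0,T]$ with $\mathcal{M}_0,\mathcal{M}<\infty$. There exist constants $\hat C_2,\hat C_3>0$, depending only on $c_0,\mathcal{M}_0,\mathcal{M},m,\alpha,\beta$, such that for every $\tau\in(0,1)$, every time-splitting solution with mesh $\tau$ whose initial data satisfy $\sum_j(|u_j^0|^2+|v_j^0|^2)\tau\le c_0$, all $j\in\mathbb{Z}$, all integers $n\ge0$ with $(n+1)\tau\le T$, and all $s\in[0,\tau]$, $$\tilde{\mathcal{L}}_j^n(s)+\tilde{\mathcal{D}}_j^n(s)\le\hat C_2\big(\tilde{\mathcal{L}}_j^n(0)+\tilde{\mathcal{D}}_j^n(0)\big)+\hat C_3\mathcal{M}^2\tau.$$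
   Context: Fix constants $m\ge 0$ and $\alpha,\beta\in\mathbb{R}$. The NLDE for $(u,v):\mathbb{R}\times[0,T]\to\mathbb{C}^2$ is $u_t+u_x=imv+i\alpha u|v|^2+2i\beta(\bar u v+u\bar v)v$, $v_t-v_x=imu+i\alpha v|u|^2+2i\beta(\bar u v+u\bar v)u$. Let (N) denote the ODE system on $\mathbb{C}^2$: $\frac{du}{ds}=imv+i\alpha u|v|^2+2i\beta(\bar u v+u\bar v)v$, $\frac{dv}{ds}=imu+i\alpha v|u|^2+2i\beta(\bar u v+u\bar v)u$. Time-splitting scheme with mesh $\tau>0$: given $(u_j^0,v_j^0)_{j\in\mathbb{Z}}\subset\mathbb{C}^2$ with $\sum_j(|u_j^0|^2+|v_j^0|^2)<\infty$, set $(u^{(\tau)},v^{(\tau)})(x,0)=(u_j^0,v_j^0)$ for $x\in[j\tau,(j+1)\tau)$. Inductively, once $(u^{(\tau)},v^{(\tau)})(\cdot,n\tau)$ is defined, set for $t\in[n\tau,(n+1)\tau)$: $u^{(\tau)}(x,t)=u^{(\tau)}(x-(t-n\tau),n\tau)$, $v^{(\tau)}(x,t)=v^{(\tau)}(x+(t-n\tau),n\tau)$; let $(u^{(\tau)},v^{(\tau)})(x,(n+1)\tau-)$ be the left limit in $t$; and for each $x$ define $(u^{(\tau)},v^{(\tau)})(x,(n+1)\tau)$ as the value at $s=\tau$ of the solution of (N) with value $(u^{(\tau)},v^{(\tau)})(x,(n+1)\tau-)$ at $s=0$ (this is globally well defined). Notation: $(u_j^n,v_j^n)=(u^{(\tau)},v^{(\tau)})(j\tau,n\tau)$,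 $(u_j^{n+1-},v_j^{n+1-})=(u^{(\tau)},v^{(\tau)})(j\tau,(n+1)\tau-)$; $(u_j^{n,2}(s),v_j^{n,2}(s))$, $s\in[0,\tau]$, is the solution of (N) with initial value $(u_j^{n+1-},v_j^{n+1-})$. Comparison quantities: $\mathcal{M}_0=\max_{\mathbb{R}\times[0,T]}(|\hat u|+|\hat v|+1)$, $\mathcal{M}=\max_{\mathbb{R}\times[0,T]}(|\hat u_t|+|\hat u_x|+|\hat v_t|+|\hat v_x|+1)$. For $s\in[0,\tau]$: $\mathcal{U}_j^n(s)=\hat u(j\tau+s,n\tau+s)-u_{j+1}^{n,2}(s)$, $\mathcal{V}_{j+2}^n(s)=\hat v((j+2)\tau-s,n\tau+s)-v_{j+1}^{n,2}(s)$, $\tilde{\mathcal{L}}_j^n(s)=|\mathcal{U}_j^n(s)|^2+|\mathcal{V}_{j+2}^n(s)|^2$, $\tilde{\mathcal{D}}_j^n(s)=|\mathcal{U}_j^n(s)|^2|v_{j+1}^{n,2}(s)|^2+|\mathcal{V}_{j+2}^n(s)|^2|u_{j+1}^{n,2}(s)|^2$. *)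

(* Defs.v *)
From Stdlib Require Import Reals ZArith.
From Coquelicot Require Import Coquelicot.
Open Scope R_scope.

(* The nonlinearity of (N) / NLDE:
   F1 (u,v) = i m v + i a u |v|^2 + 2 i b (conj u v + u conj v) v
   F2 (u,v) = i m u + i a v |u|^2 + 2 i b (conj u v + u conj v) u *)
Definition NL1 (m a b : R) (u v : C) : C :=
  Cplus (Cplus (Cmult (Cmult Ci (RtoC m)) v)
               (Cmult (Cmult (Cmult Ci (RtoC a)) u) (RtoC (Cmod v ^ 2))))
        (Cmult (Cmult (Cmult (RtoC 2) (Cmult Ci (RtoC b)))
                      (Cplus (Cmult (Cconj u) v) (Cmult u (Cconj v)))) v).

Definition NL2 (m a b : R) (u v : C) : C :=
  Cplus (Cplus (Cmult (Cmult Ci (RtoC m)) u)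
               (Cmult (Cmult (Cmult Ci (RtoC a)) v) (RtoC (Cmod u ^ 2))))
        (Cmult (Cmult (Cmult (RtoC 2) (Cmult Ci (RtoC b)))
                      (Cplus (Cmult (Cconj u) v) (Cmult u (Cconj v)))) u).

Definition solves_N (m a b : R) (wu wv : R -> C) : Prop :=
  forall s : R,
    is_derive wu s (NL1 m a b (wu s) (wv s)) /\
    is_derive wv s (NL2 m a b (wu s) (wv s)).

Definition smooth2 (f : R -> R -> C) : Prop :=
  exists D : nat -> nat -> R -> R -> C,
    D O O = f /\
    forall (k l : nat) (x t : R),
      is_derive (fun y => D k l y t) x (D (S k) l x t) /\
      is_derive (fun s => D k l x s) t (D k (S l) x t) /\
      continuous (fun p : R * R => D k l (fst p) (snd p)) (x, t).

Definition sumZ_sym (f : Z -> R) (N : nat) : R :=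
  sum_f_R0 (fun k => f (Z.of_nat k - Z.of_nat N)%Z) (2 * N).

(* The time-splitting scheme with mesh tau, initial data (u0 j, v0 j),
   producing (U, V) : R -> R -> C (space, time), for all times t >= 0. *)
Definition time_splitting (m a b tau : R) (u0 v0 : Z -> C)
    (U V : R -> R -> C) : Prop :=
  (forall (j : Z) (x : R), IZR j * tau <= x < (IZR j + 1) * tau ->
      U x 0 = u0 j /\ V x 0 = v0 j) /\
  (forall (n : nat) (x t : R), INR n * tau <= t < (INR n + 1) * tau ->
      U x t = U (x - (t - INR n * tau)) (INR n * tau) /\
      V x t = V (x + (t - INR n * tau)) (INR n * tau)) /\
  (forall (n : nat) (x : R), exists (Lu Lv : C) (wu wv : R -> C),
      filterlim (fun t => U x t) (at_left ((INR n + 1) * tau)) (locally Lu) /\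
      filterlim (fun t => V x t) (at_left ((INR n + 1) * tau)) (locally Lv) /\
      solves_N m a b wu wv /\ wu 0 = Lu /\ wv 0 = Lv /\
      U x ((INR n + 1) * tau) = wu tau /\ V x ((INR n + 1) * tau) = wv tau).

(* Main.v *)
Require Import Defs.
From Stdlib Require Import Reals ZArith Lra Lia Psatz.
From Coquelicot Require Import Coquelicot.
Open Scope R_scope.

Definition ipC (z w : C) : R := Re z * Re w + Im z * Im w.
Definition crs (z w : C) : R := Re z * Im w - Im z * Re w.

Lemma NL1_re m a b u v : Re (NL1 m a b u v) =
  - m * Im v - a * Im u * (Re v ^2 + Im v ^2) - 2 * b * (2 * ipC u v) * Im v.
Proof. unfold NL1, ipC. rewrite Cmod2_alt. unfold Re, Im; simpl. ring. Qed.
Lemma NL1_im m a b u v : Im (NL1 m a b u v) =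
  m * Re v + a * Re u * (Re v ^2 + Im v ^2) + 2 * b * (2 * ipC u v) * Re v.
Proof. unfold NL1, ipC. rewrite Cmod2_alt. unfold Re, Im; simpl. ring. Qed.
Lemma NL2_re m a b u v : Re (NL2 m a b u v) =
  - m * Im u - a * Im v * (Re u ^2 + Im u ^2) - 2 * b * (2 * ipC u v) * Im u.
Proof. unfold NL2, ipC. rewrite Cmod2_alt. unfold Re, Im; simpl. ring. Qed.
Lemma NL2_im m a b u v : Im (NL2 m a b u v) =
  m * Re u + a * Re v * (Re u ^2 + Im u ^2) + 2 * b * (2 * ipC u v) * Re u.
Proof. unfold NL2, ipC. rewrite Cmod2_alt. unfold Re, Im; simpl. ring. Qed.
Lemma Re_minus u v : Re (Cminus u v) = Re u - Re v.
Proof. unfold Re; simpl; ring. Qed.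
Lemma Im_minus u v : Im (Cminus u v) = Im u - Im v.
Proof. unfold Im; simpl; ring. Qed.
Lemma Re_plus u v : Re (Cplus u v) = Re u + Re v.
Proof. unfold Re; simpl; ring. Qed.
Lemma Im_plus u v : Im (Cplus u v) = Im u + Im v.
Proof. unfold Im; simpl; ring. Qed.

Lemma ip_crs z w : ipC z w ^2 + crs z w ^2 = (Cmod z * Cmod w)^2.
Proof. rewrite Rpow_mult_distr, !Cmod2_alt. unfold ipC, crs. ring. Qed.
Lemma ipC_bound z w : Rabs (ipC z w) <= Cmod z * Cmod w.
Proof.
  pose proof (ip_crs z w). pose proof (Cmod_ge_0 z). pose proof (Cmod_ge_0 w).
  rewrite <- (Rabs_pos_eq (Cmod z * Cmod w)) by nra.
  apply Rsqr_le_abs_0. unfold Rsqr. pose proof (pow2_ge_0 (crs z w)). nra.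
Qed.
Lemma crs_bound z w : Rabs (crs z w) <= Cmod z * Cmod w.
Proof.
  pose proof (ip_crs z w). pose proof (Cmod_ge_0 z). pose proof (Cmod_ge_0 w).
  rewrite <- (Rabs_pos_eq (Cmod z * Cmod w)) by nra.
  apply Rsqr_le_abs_0. unfold Rsqr. pose proof (pow2_ge_0 (ipC z w)). nra.
Qed.
Lemma negprod c u v U V : Rabs u <= U -> Rabs v <= V -> - (c*u*v) <= Rabs c * (U*V).
Proof.
  intros H1 H2. eapply Rle_trans. apply Rle_abs. rewrite Rabs_Ropp, !Rabs_mult.
  rewrite Rmult_assoc. apply Rmult_le_compat_l. apply Rabs_pos.
  apply Rmult_le_compat; auto; apply Rabs_pos.
Qed.

Ltac comp := unfold ipC, crs; rewrite ?Re_minus, ?Im_minus, ?Re_plus, ?Im_plus,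
  ?NL1_re, ?NL1_im, ?NL2_re, ?NL2_im; unfold ipC; rewrite ?Re_minus, ?Im_minus, ?Re_plus, ?Im_plus; ring.

Lemma id1 m al be a b p q da : ipC (Cminus a p) (Cminus da (NL1 m al be p q)) =
  ipC (Cminus a p) (Cminus da (NL1 m al be a b))
  + (- (m * crs (Cminus a p) (Cminus b q))
     - (al * ipC (Cminus b q) (Cplus b q) * crs (Cminus a p) p)
     - (be * (2*(2*ipC a b)) * crs (Cminus a p) (Cminus b q))
     - (be * (2*(2*(ipC (Cminus a p) b + ipC p (Cminus b q)))) * crs (Cminus a p) q)).
Proof. comp. Qed.
Lemma id2 m al be a b p q db : ipC (Cminus b q) (Cminus db (NL2 m al be p q)) =
  ipC (Cminus b q) (Cminus db (NL2 m al be a b))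
  + (- (m * crs (Cminus b q) (Cminus a p))
     - (al * ipC (Cminus a p) (Cplus a p) * crs (Cminus b q) q)
     - (be * (2*(2*ipC a b)) * crs (Cminus b q) (Cminus a p))
     - (be * (2*(2*(ipC (Cminus a p) b + ipC p (Cminus b q)))) * crs (Cminus b q) p)).
Proof. comp. Qed.
Lemma id3 m al be p q : ipC q (NL2 m al be p q) = - (m * crs q p) - (be * (2*(2*ipC p q)) * crs q p).
Proof. comp. Qed.
Lemma id4 m al be p q : ipC p (NL1 m al be p q) = - (m * crs p q) - (be * (2*(2*ipC p q)) * crs p q).
Proof. comp. Qed.
Lemma sq2 a b : 2*a*b <= a^2+b^2.
Proof. pose proof (pow2_ge_0 (a-b)). lra. Qed.
Lemma mono a b c d : 0 <= a -> a <= b -> 0 <= c -> c <= d -> a*c <= b*d.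
Proof. intros. apply Rmult_le_compat; auto. Qed.
Lemma mono_l c a b : 0 <= c -> a <= b -> c*a <= c*b.
Proof. intros. apply Rmult_le_compat_l; auto. Qed.

Lemma abstract_bound m al be M K E X Y P Q Aa B :
  0 <= m -> 0 <= al -> 0 <= be -> 0 <= M -> 0 <= E ->
  0 <= X -> 0 <= Y -> 0 <= P -> 0 <= Q -> 0 <= Aa -> 0 <= B ->
  Aa <= M -> B <= M -> P^2 + Q^2 <= K ->
  2*(1+Q^2)*(X*E + m*(X*Y) + al*((Y*(B+Q))*(X*P)) + be*(2*(2*Aa*B)*(X*Y)) + be*(2*(2*(X*B+P*Y))*(X*Q)))
+ 2*(1+P^2)*(Y*E + m*(X*Y) + al*((X*(Aa+P))*(Y*Q)) + be*(2*(2*Aa*B)*(X*Y)) + be*(2*(2*(X*B+P*Y))*(Y*P)))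
+ X^2*(2*(m*(Q*P) + be*(2*(2*P*Q)*(Q*P)))) + Y^2*(2*(m*(P*Q) + be*(2*(2*P*Q)*(P*Q))))
<= 100*(1+m+al+be)*(1+M)^2*(1+K)*(X^2*(1+Q^2)+Y^2*(1+P^2)) + (1+K)*(2*E^2).
Proof.
  intros Hm Hal Hbe HM HE HX HY HP HQ HA HB HAM HBM HK.
  assert (P2 : 0 <= P^2) by apply pow2_ge_0.
  assert (Q2 : 0 <= Q^2) by apply pow2_ge_0.
  assert (X2 : 0 <= X^2) by apply pow2_ge_0.
  assert (Y2 : 0 <= Y^2) by apply pow2_ge_0.
  assert (E2 : 0 <= E^2) by apply pow2_ge_0.
  assert (HP2 : P^2 <= K) by lra. assert (HQ2 : Q^2 <= K) by lra.
  assert (K0 : 0 <= K) by lra.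
  remember (X^2*(1+Q^2)+Y^2*(1+P^2)) as phi eqn:Ephi.
  remember ((1+K)*phi) as F eqn:EF.
  assert (h1 : X^2*(1+Q^2) <= phi) by (subst; nra).
  assert (h3 : Y^2*(1+P^2) <= phi) by (subst; nra).
  assert (hphi : 0 <= phi) by (subst; nra).
  assert (hF : phi <= F) by (subst; nra).
  assert (hX2 : X^2 <= phi) by nra.
  assert (hY2 : Y^2 <= phi) by nra.
  assert (hXQ : X^2*Q^2 <= phi) by nra.
  assert (hYP : Y^2*P^2 <= phi) by nra.
  assert (hKphi : K*phi <= F) by (subst; nra).
  assert (hKF : phi*K <= F) by (subst; nra).
  assert (TE1 : 2*(1+Q^2)*(X*E) <= phi + (1+K)*E^2).
  { assert (2*X*E <= X^2+E^2) by apply sq2.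
    assert ((1+Q^2)*(2*X*E) <= (1+Q^2)*(X^2+E^2)) by (apply mono_l; lra).
    assert (E^2*(1+Q^2) <= E^2*(1+K)) by (apply mono_l; lra).
    nra. }
  assert (TE2 : 2*(1+P^2)*(Y*E) <= phi + (1+K)*E^2).
  { assert (2*Y*E <= Y^2+E^2) by apply sq2.
    assert ((1+P^2)*(2*Y*E) <= (1+P^2)*(Y^2+E^2)) by (apply mono_l; lra).
    assert (E^2*(1+P^2) <= E^2*(1+K)) by (apply mono_l; lra).
    nra. }
  assert (Ta1 : 2*(1+Q^2)*(X*Y) <= 2*F).
  { assert (2*X*Y <= X^2+Y^2) by apply sq2.
    assert (Y^2*Q^2 <= phi*K) by (apply mono; lra).
    assert ((1+Q^2)*(2*X*Y) <= (1+Q^2)*(X^2+Y^2)) by (apply mono_l; lra).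
    nra. }
  assert (Ta2 : 2*(1+P^2)*(X*Y) <= 2*F).
  { assert (2*X*Y <= X^2+Y^2) by apply sq2.
    assert (X^2*P^2 <= phi*K) by (apply mono; lra).
    assert ((1+P^2)*(2*X*Y) <= (1+P^2)*(X^2+Y^2)) by (apply mono_l; lra).
    nra. }
  assert (Tb1 : 2*(1+Q^2)*(X*(P*Y)) <= 2*F).
  { assert (2*X*(P*Y) <= X^2+(P*Y)^2) by apply sq2.
    assert (Q^2*(Y^2*P^2) <= K*phi) by (apply mono; nra).
    assert ((1+Q^2)*(2*X*(P*Y)) <= (1+Q^2)*(X^2+(P*Y)^2)) by (apply mono_l; lra).
    nra. }
  assert (Tb2 : 2*(1+P^2)*(Y*(Q*X)) <= 2*F).
  { assert (2*Y*(Q*X) <= Y^2+(Q*X)^2) by apply sq2.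
    assert (P^2*(X^2*Q^2) <= K*phi) by (apply mono; nra).
    assert ((1+P^2)*(2*Y*(Q*X)) <= (1+P^2)*(Y^2+(Q*X)^2)) by (apply mono_l; lra).
    nra. }
  assert (Tb3 : 2*(1+P^2)*(X*(P*Y)) <= 2*F).
  { assert (2*X*(P*Y) <= X^2+(P*Y)^2) by apply sq2.
    assert (P^2*(Y^2*P^2) <= K*phi) by (apply mono; nra).
    assert (P^2*X^2 <= K*phi) by (apply mono; nra).
    assert ((1+P^2)*(2*X*(P*Y)) <= (1+P^2)*(X^2+(P*Y)^2)) by (apply mono_l; lra).
    nra. }
  assert (Tc1 : 2*(1+Q^2)*((X*Q)*(P*Y)) <= F).
  { assert (2*(X*Q)*(P*Y) <= (X*Q)^2+(P*Y)^2) by apply sq2.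
    assert ((1+Q^2)*(X^2*Q^2+Y^2*P^2) <= (1+K)*phi) by (apply mono; nra).
    assert ((1+Q^2)*(2*(X*Q)*(P*Y)) <= (1+Q^2)*((X*Q)^2+(P*Y)^2)) by (apply mono_l; lra).
    nra. }
  assert (Tc2 : 2*(1+P^2)*((X*Q)*(P*Y)) <= F).
  { assert (2*(X*Q)*(P*Y) <= (X*Q)^2+(P*Y)^2) by apply sq2.
    assert ((1+P^2)*(X^2*Q^2+Y^2*P^2) <= (1+K)*phi) by (apply mono; nra).
    assert ((1+P^2)*(2*(X*Q)*(P*Y)) <= (1+P^2)*((X*Q)^2+(P*Y)^2)) by (apply mono_l; lra).
    nra. }
  assert (Td1 : 2*(1+Q^2)*(X*X*Q) <= F).
  { assert (2*Q <= 1+Q^2) by (pose proof (sq2 Q 1); lra).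
    assert (X^2*(1+Q^2)*(2*Q) <= phi*(1+K)) by (apply mono; nra).
    nra. }
  assert (Td2 : 2*(1+P^2)*(Y*Y*P) <= F).
  { assert (2*P <= 1+P^2) by (pose proof (sq2 P 1); lra).
    assert (Y^2*(1+P^2)*(2*P) <= phi*(1+K)) by (apply mono; nra).
    nra. }
  assert (Te2 : 2*(1+P^2)*(Y*Y*(P*P)) <= 2*F).
  { assert ((1+P^2)*(Y^2*P^2) <= (1+K)*phi) by (apply mono; nra). nra. }
  assert (Tf1 : X^2*(2*(Q*P)) <= F).
  { assert (2*Q*P <= Q^2+P^2) by apply sq2.
    assert (X^2*(Q^2+P^2) <= phi*K) by (apply mono; nra). nra. }
  assert (Tf2 : Y^2*(2*(Q*P)) <= F).
  { assert (2*Q*P <= Q^2+P^2) by apply sq2.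
    assert (Y^2*(Q^2+P^2) <= phi*K) by (apply mono; nra). nra. }
  assert (Tg1 : X^2*((Q*P)*(Q*P)) <= F).
  { assert (X^2*Q^2*P^2 <= phi*K) by (apply mono; nra). nra. }
  assert (Tg2 : Y^2*((Q*P)*(Q*P)) <= F).
  { assert (Y^2*P^2*Q^2 <= phi*K) by (apply mono; nra). nra. }
  assert (Eq : 
  2*(1+Q^2)*(X*E + m*(X*Y) + al*((Y*(B+Q))*(X*P)) + be*(2*(2*Aa*B)*(X*Y)) + be*(2*(2*(X*B+P*Y))*(X*Q)))
+ 2*(1+P^2)*(Y*E + m*(X*Y) + al*((X*(Aa+P))*(Y*Q)) + be*(2*(2*Aa*B)*(X*Y)) + be*(2*(2*(X*B+P*Y))*(Y*P)))
+ X^2*(2*(m*(Q*P) + be*(2*(2*P*Q)*(Q*P)))) + Y^2*(2*(m*(P*Q) + be*(2*(2*P*Q)*(P*Q))))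
  = 2*(1+Q^2)*(X*E) + 2*(1+P^2)*(Y*E)
    + m*(2*(1+Q^2)*(X*Y)) + (al*B)*(2*(1+Q^2)*(X*(P*Y))) + al*(2*(1+Q^2)*((X*Q)*(P*Y)))
    + (be*(4*Aa*B))*(2*(1+Q^2)*(X*Y)) + (4*be*B)*(2*(1+Q^2)*(X*X*Q)) + (4*be)*(2*(1+Q^2)*((X*Q)*(P*Y)))
    + m*(2*(1+P^2)*(X*Y)) + (al*Aa)*(2*(1+P^2)*(Y*(Q*X))) + al*(2*(1+P^2)*((X*Q)*(P*Y)))
    + (be*(4*Aa*B))*(2*(1+P^2)*(X*Y)) + (4*be*B)*(2*(1+P^2)*(X*(P*Y))) + (4*be)*(2*(1+P^2)*(Y*Y*(P*P)))
    + m*(X^2*(2*(Q*P))) + (8*be)*(X^2*((Q*P)*(Q*P)))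
    + m*(Y^2*(2*(Q*P))) + (8*be)*(Y^2*((Q*P)*(Q*P)))) by ring.
  rewrite Eq; clear Eq.
  assert (pos1 : 0 <= 2*(1+Q^2)*(X*Y)) by (apply Rmult_le_pos; nra).
  assert (pos2 : 0 <= 2*(1+P^2)*(X*Y)) by (apply Rmult_le_pos; nra).
  assert (pos3 : 0 <= 2*(1+Q^2)*(X*(P*Y))) by (apply Rmult_le_pos; [nra|apply Rmult_le_pos; nra]).
  assert (pos4 : 0 <= 2*(1+P^2)*(Y*(Q*X))) by (apply Rmult_le_pos; [nra|apply Rmult_le_pos; nra]).
  assert (pos5 : 0 <= 2*(1+Q^2)*(X*X*Q)) by (apply Rmult_le_pos; [nra|apply Rmult_le_pos; nra]).
  assert (pos6 : 0 <= 2*(1+P^2)*(X*(P*Y))) by (apply Rmult_le_pos; [nra|apply Rmult_le_pos; nra]).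
  assert (AB0 : 0 <= Aa*B) by nra. assert (ABM : Aa*B <= M*M) by (apply mono; lra).
  assert (u1 : m*(2*(1+Q^2)*(X*Y)) <= m*(2*F)) by (apply mono_l; lra).
  assert (u2 : (al*B)*(2*(1+Q^2)*(X*(P*Y))) <= (al*M)*(2*F)) by (apply mono; nra).
  assert (u3 : al*(2*(1+Q^2)*((X*Q)*(P*Y))) <= al*F) by (apply mono_l; lra).
  assert (u4 : (be*(4*Aa*B))*(2*(1+Q^2)*(X*Y)) <= (be*(4*(M*M)))*(2*F)) by (apply mono; nra).
  assert (u5 : (4*be*B)*(2*(1+Q^2)*(X*X*Q)) <= (4*be*M)*F) by (apply mono; nra).
  assert (u6 : (4*be)*(2*(1+Q^2)*((X*Q)*(P*Y))) <= (4*be)*F) by (apply mono_l; lra).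
  assert (u7 : m*(2*(1+P^2)*(X*Y)) <= m*(2*F)) by (apply mono_l; lra).
  assert (u8 : (al*Aa)*(2*(1+P^2)*(Y*(Q*X))) <= (al*M)*(2*F)) by (apply mono; nra).
  assert (u9 : al*(2*(1+P^2)*((X*Q)*(P*Y))) <= al*F) by (apply mono_l; lra).
  assert (u10 : (be*(4*Aa*B))*(2*(1+P^2)*(X*Y)) <= (be*(4*(M*M)))*(2*F)) by (apply mono; nra).
  assert (u11 : (4*be*B)*(2*(1+P^2)*(X*(P*Y))) <= (4*be*M)*(2*F)) by (apply mono; nra).
  assert (u12 : (4*be)*(2*(1+P^2)*(Y*Y*(P*P))) <= (4*be)*(2*F)) by (apply mono_l; lra).
  assert (u13 : m*(X^2*(2*(Q*P))) <= m*F) by (apply mono_l; lra).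
  assert (u14 : (8*be)*(X^2*((Q*P)*(Q*P))) <= (8*be)*F) by (apply mono_l; lra).
  assert (u15 : m*(Y^2*(2*(Q*P))) <= m*F) by (apply mono_l; lra).
  assert (u16 : (8*be)*(Y^2*((Q*P)*(Q*P))) <= (8*be)*F) by (apply mono_l; lra).
  assert (Hc : 2 + 6*m + al*(4*M+2) + be*(16*(M*M)+12*M+28) <= 100*(1+m+al+be)*(1+M)^2) by nra.
  assert (Hc2 : (2 + 6*m + al*(4*M+2) + be*(16*(M*M)+12*M+28))*F <= (100*(1+m+al+be)*(1+M)^2)*F)
    by (apply Rmult_le_compat_r; lra).
  assert (HF : (1+K)*phi = F) by (subst; ring).
  rewrite Rmult_assoc with (r2 := (1+K)), HF.
  nra.
Qed.

Definition Acst (m al be M : R) := 100*(1+m+Rabs al+Rabs be)*(1+M)^2.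

Lemma pointwise m al be M K E (a b p q da db : C) :
  0 <= m -> 0 <= M -> 0 <= E ->
  Cmod a <= M -> Cmod b <= M -> Cmod p ^2 + Cmod q ^2 <= K ->
  Cmod (Cminus da (NL1 m al be a b)) <= E -> Cmod (Cminus db (NL2 m al be a b)) <= E ->
  2*ipC (Cminus a p) (Cminus da (NL1 m al be p q))*(1+Cmod q^2)
  + 2*ipC (Cminus b q) (Cminus db (NL2 m al be p q))*(1+Cmod p^2)
  + Cmod (Cminus a p)^2*(2*ipC q (NL2 m al be p q))
  + Cmod (Cminus b q)^2*(2*ipC p (NL1 m al be p q))
  <= Acst m al be M * (1+K) * (Cmod (Cminus a p)^2*(1+Cmod q^2) + Cmod (Cminus b q)^2*(1+Cmod p^2))
     + (1+K)*(2*E^2).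
Proof.
  intros Hm HM HE Ha Hb HK He1 He2.
  rewrite id1 with (a:=a) (b:=b), id2 with (a:=a) (b:=b), id3, id4.
  set (X := Cmod (Cminus a p)). set (Y := Cmod (Cminus b q)).
  set (P := Cmod p). set (Q := Cmod q). set (Aa := Cmod a). set (B := Cmod b).
  assert (HX : 0 <= X) by apply Cmod_ge_0. assert (HY : 0 <= Y) by apply Cmod_ge_0.
  assert (HP : 0 <= P) by apply Cmod_ge_0. assert (HQ : 0 <= Q) by apply Cmod_ge_0.
  assert (HA : 0 <= Aa) by apply Cmod_ge_0. assert (HB : 0 <= B) by apply Cmod_ge_0.
  pose proof (abstract_bound m (Rabs al) (Rabs be) M K E X Y P Q Aa B Hm (Rabs_pos al) (Rabs_pos be)
     HM HE HX HY HP HQ HA HB Ha Hb HK) as AB.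
  unfold Acst.
  assert (Hxb : Rabs (ipC (Cminus a p) b + ipC p (Cminus b q)) <= X*B+P*Y).
  { eapply Rle_trans. apply Rabs_triang. pose proof (ipC_bound (Cminus a p) b).
    pose proof (ipC_bound p (Cminus b q)). fold X B P Y in H, H0. lra. }
  assert (Hab : Rabs (2*(2*ipC a b)) <= 2*(2*Aa*B)).
  { rewrite !Rabs_mult, !(Rabs_pos_eq 2) by lra. pose proof (ipC_bound a b). fold Aa B in H. lra. }
  assert (Hpq : Rabs (2*(2*ipC p q)) <= 2*(2*P*Q)).
  { rewrite !Rabs_mult, !(Rabs_pos_eq 2) by lra. pose proof (ipC_bound p q). fold P Q in H. lra. }
  assert (Hxb2 : Rabs (2*(2*(ipC (Cminus a p) b + ipC p (Cminus b q)))) <= 2*(2*(X*B+P*Y))).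
  { rewrite !Rabs_mult, !(Rabs_pos_eq 2) by lra. lra. }
  assert (Hbq : Rabs (ipC (Cminus b q) (Cplus b q)) <= Y*(B+Q)).
  { eapply Rle_trans. apply ipC_bound. fold Y. apply mono_l. auto.
    apply Cmod_triangle. }
  assert (Hap : Rabs (ipC (Cminus a p) (Cplus a p)) <= X*(Aa+P)).
  { eapply Rle_trans. apply ipC_bound. fold X. apply mono_l. auto.
    apply Cmod_triangle. }
  assert (Hmc : forall z w, - (m * crs z w) <= m * (Cmod z * Cmod w)).
  { intros z w. pose proof (crs_bound z w). pose proof (Rle_abs (- crs z w)).
    rewrite Rabs_Ropp in H0. nra. }
  assert (c1 : ipC (Cminus a p) (Cminus da (NL1 m al be a b)) <= X*E).
  { eapply Rle_trans. apply Rle_abs. eapply Rle_trans. apply ipC_bound. apply mono_l; auto. }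
  assert (c2 : ipC (Cminus b q) (Cminus db (NL2 m al be a b)) <= Y*E).
  { eapply Rle_trans. apply Rle_abs. eapply Rle_trans. apply ipC_bound. apply mono_l; auto. }
  pose proof (Hmc (Cminus a p) (Cminus b q)) as m1.
  pose proof (Hmc (Cminus b q) (Cminus a p)) as m2.
  pose proof (Hmc q p) as m3. pose proof (Hmc p q) as m4.
  fold X Y P Q in m1, m2, m3, m4.
  pose proof (negprod al _ _ _ _ Hbq (crs_bound (Cminus a p) p)) as n1.
  pose proof (negprod be _ _ _ _ Hab (crs_bound (Cminus a p) (Cminus b q))) as n2.
  pose proof (negprod be _ _ _ _ Hxb2 (crs_bound (Cminus a p) q)) as n3.
  pose proof (negprod al _ _ _ _ Hap (crs_bound (Cminus b q) q)) as n4.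
  pose proof (negprod be _ _ _ _ Hab (crs_bound (Cminus b q) (Cminus a p))) as n5.
  pose proof (negprod be _ _ _ _ Hxb2 (crs_bound (Cminus b q) p)) as n6.
  pose proof (negprod be _ _ _ _ Hpq (crs_bound q p)) as n7.
  pose proof (negprod be _ _ _ _ Hpq (crs_bound p q)) as n8.
  fold X Y P Q in n1, n2, n3, n4, n5, n6, n7, n8.
  match goal with |- 2 * ?T1 * _ + 2 * ?T2 * _ + _ * (2 * ?T3) + _ * (2 * ?T4) <= _ =>
    set (t1 := T1); set (t2 := T2); set (t3 := T3); set (t4 := T4) end.
  assert (b1 : t1 <= X*E + m*(X*Y) + Rabs al*((Y*(B+Q))*(X*P)) + Rabs be*(2*(2*Aa*B)*(X*Y))
                + Rabs be*(2*(2*(X*B+P*Y))*(X*Q))) by (unfold t1; lra).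
  assert (b2 : t2 <= Y*E + m*(X*Y) + Rabs al*((X*(Aa+P))*(Y*Q)) + Rabs be*(2*(2*Aa*B)*(X*Y))
                + Rabs be*(2*(2*(X*B+P*Y))*(Y*P))) by (unfold t2; lra).
  assert (b3 : t3 <= m*(Q*P) + Rabs be*(2*(2*P*Q)*(Q*P))) by (unfold t3; lra).
  assert (b4 : t4 <= m*(P*Q) + Rabs be*(2*(2*P*Q)*(P*Q))) by (unfold t4; lra).
  assert (Q2 : 0 <= Q^2) by apply pow2_ge_0. assert (P2 : 0 <= P^2) by apply pow2_ge_0.
  assert (X2 : 0 <= X^2) by apply pow2_ge_0. assert (Y2 : 0 <= Y^2) by apply pow2_ge_0.
  assert (d1 : (2*(1+Q^2))*t1 <= (2*(1+Q^2))*(X*E + m*(X*Y) + Rabs al*((Y*(B+Q))*(X*P)) + Rabs be*(2*(2*Aa*B)*(X*Y))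
                + Rabs be*(2*(2*(X*B+P*Y))*(X*Q)))) by (apply mono_l; lra).
  assert (d2 : (2*(1+P^2))*t2 <= (2*(1+P^2))*(Y*E + m*(X*Y) + Rabs al*((X*(Aa+P))*(Y*Q)) + Rabs be*(2*(2*Aa*B)*(X*Y))
                + Rabs be*(2*(2*(X*B+P*Y))*(Y*P)))) by (apply mono_l; lra).
  assert (d3 : X^2*(2*t3) <= X^2*(2*(m*(Q*P) + Rabs be*(2*(2*P*Q)*(Q*P))))) by (apply mono_l; lra).
  assert (d4 : Y^2*(2*t4) <= Y^2*(2*(m*(P*Q) + Rabs be*(2*(2*P*Q)*(P*Q))))) by (apply mono_l; lra).
  lra.
Qed.
Lemma Rd_minus (f g : R -> R) (x a b : R) : is_derive f x a -> is_derive g x b ->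
  is_derive (fun t => f t - g t) x (a - b).
Proof. intros H1 H2. apply (is_derive_minus f g x a b H1 H2). Qed.
Lemma Rd_plus (f g : R -> R) (x a b : R) : is_derive f x a -> is_derive g x b ->
  is_derive (fun t => f t + g t) x (a + b).
Proof. intros H1 H2. apply (is_derive_plus f g x a b H1 H2). Qed.
Lemma Rd_mult (f g : R -> R) (x a b : R) : is_derive f x a -> is_derive g x b ->
  is_derive (fun t => f t * g t) x (a * g x + f x * b).
Proof. intros H1 H2. apply (is_derive_mult f g x a b H1 H2). intros; apply Rmult_comm. Qed.
Lemma Rd_ext (f : R -> R) (x a b : R) : is_derive f x a -> a = b -> is_derive f x b.
Proof. intros H ->. exact H. Qed.
Lemma Rd_extf (f g : R -> R) (x l : R) : (forall t, f t = g t) -> is_derive f x l -> is_derive g x l.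
Proof. intros H1 H2. exact (is_derive_ext f g x l H1 H2). Qed.
Lemma Rd_lin (k : R) x : is_derive (fun t => k * t) x k.
Proof. auto_derive; auto; ring. Qed.
Lemma Rd_const (k : R) x : is_derive (fun _ => k) x 0.
Proof. auto_derive; auto. Qed.

Lemma gronwall (phi dphi : R -> R) K c tau :
 0 <= K -> 0 <= c ->
 (forall s, 0 <= s <= tau -> is_derive phi s (dphi s)) ->
 (forall s, 0 <= s <= tau -> dphi s <= K * phi s + c) ->
 forall s, 0 <= s <= tau -> phi s <= exp (K*s) * (phi 0 + c*s).
Proof.
  intros HK Hc Hd Hb s Hs.
  set (psi := fun t => exp (-K*t) * phi t - c * t).
  set (dpsi := fun t => (-K) * exp (-K*t) * phi t + exp (-K*t) * dphi t - c).
  assert (Hdpsi : forall t, 0 <= t <= tau -> is_derive psi t (dpsi t)).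
  { intros t Ht. unfold psi, dpsi.

    apply Rd_minus; [|apply Rd_lin].
    apply (Rd_mult (fun t => exp (-K*t)) phi).
    - apply (is_derive_comp exp (fun t => -K*t)). apply is_derive_exp. apply Rd_lin.
    - apply Hd; exact Ht. }
  destruct (Req_dec s 0) as [->|Hs0].
  { rewrite Rmult_0_r, exp_0. lra. }
  assert (Hmvt := MVT_gen psi 0 s dpsi).
  simpl in Hmvt. rewrite Rmin_left, Rmax_right in Hmvt by lra.
  destruct Hmvt as [xi [Hxi Heq]].
  - intros x Hx. apply Hdpsi. lra.
  - intros x Hx. apply derivable_continuous_pt. exists (dpsi x).
    apply is_derive_Reals. apply Hdpsi. lra.
  - assert (Hneg : dpsi xi <= 0).
    { unfold dpsi. specialize (Hb xi ltac:(lra)).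
      assert (E1 : 0 < exp (-K*xi)) by apply exp_pos.
      assert (E2 : exp (-K*xi) <= 1).
      { rewrite <- exp_0. destruct (Req_dec (K*xi) 0) as [H0|H0].
        - replace (-K*xi) with 0 by lra. lra.
        - left. apply exp_increasing. nra. }
      nra. }
    assert (psi s <= psi 0) by nra.
    unfold psi in H. rewrite Rmult_0_r, exp_0, Rmult_0_r in H.
    assert (Hex : exp (K*s) * exp (-K*s) = 1).
    { rewrite <- exp_plus. replace (K*s + -K*s) with 0 by ring. apply exp_0. }
    assert (0 < exp (K*s)) by apply exp_pos.
    assert (phi s = exp (K*s) * (exp (-K*s) * phi s)).
    { rewrite <- Rmult_assoc, Hex. ring. }
    rewrite H1. apply Rmult_le_compat_l; lra.
Qed.

Definition cd (f : R -> C) s l := is_derive (fun t => Re (f t)) s (Re l) /\ is_derive (fun t => Im (f t)) s (Im l).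

Lemma cd_of (f : R -> C) x l : is_derive f x l -> cd f x l.
Proof.
  intros H. split; unfold is_derive in *.
  - eapply filterdiff_ext_lin.
    + apply (filterdiff_comp' f (fun z => fst z)). exact H.
      apply filterdiff_linear. apply is_linear_fst.
    + intros y. simpl. reflexivity.
  - eapply filterdiff_ext_lin.
    + apply (filterdiff_comp' f (fun z => snd z)). exact H.
      apply filterdiff_linear. apply is_linear_snd.
    + intros y. simpl. reflexivity.
Qed.

Lemma cd_minus f g s l k : cd f s l -> cd g s k -> cd (fun t => Cminus (f t) (g t)) s (Cminus l k).
Proof.
  intros [H1 H2] [H3 H4]. split.
  - eapply is_derive_ext. intros t. symmetry. apply Re_minus.
    rewrite Re_minus. apply Rd_minus; auto.
  - eapply is_derive_ext. intros t. symmetry. apply Im_minus.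
    rewrite Im_minus. apply Rd_minus; auto.
Qed.

Lemma cmod2_deriv f s l : cd f s l -> is_derive (fun t => Cmod (f t) ^ 2) s (2 * ipC (f s) l).
Proof.
  intros [H1 H2].
  eapply is_derive_ext. intros t. symmetry. apply Cmod2_alt.
  apply (Rd_ext _ _ ((Re l * Re (f s) + Re (f s) * Re l) + (Im l * Im (f s) + Im (f s) * Im l))).
  2:{ unfold ipC. ring. }
  apply Rd_plus.
  - apply (Rd_extf (fun t => Re (f t) * Re (f t))). intros; ring.
    apply Rd_mult; auto.
  - apply (Rd_extf (fun t => Im (f t) * Im (f t))). intros; ring.
    apply Rd_mult; auto.
Qed.

Lemma conserv m al be wu wv : solves_N m al be wu wv ->
  forall s, Cmod (wu s)^2 + Cmod (wv s)^2 = Cmod (wu 0)^2 + Cmod (wv 0)^2.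
Proof.
  intros HN s.
  set (psi := fun t => Cmod (wu t)^2 + Cmod (wv t)^2).
  assert (Hd : forall t, is_derive psi t 0).
  { intros t. destruct (HN t) as [Hu Hv]. unfold psi.
    apply (Rd_ext _ _ (2 * ipC (wu t) (NL1 m al be (wu t) (wv t)) + 2 * ipC (wv t) (NL2 m al be (wu t) (wv t)))).
    apply Rd_plus; apply cmod2_deriv; apply cd_of; auto.
    comp. }
  destruct (MVT_gen psi 0 s (fun _ => 0)) as [c [_ Hc]].
  - intros; apply Hd.
  - intros x _. apply derivable_continuous_pt. exists 0. apply is_derive_Reals. apply Hd.
  - unfold psi in Hc. lra.
Qed.


Lemma Acst_pos m al be M : 0 <= m -> 0 <= Acst m al be M.
Proof. intros. unfold Acst. pose proof (Rabs_pos al). pose proof (Rabs_pos be).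
  apply Rmult_le_pos. lra. apply pow2_ge_0. Qed.

Lemma main_est m al be M E tau K (a b p q da db : R -> C) :
  0 <= m -> 0 <= M -> 0 <= E ->
  (forall s, 0 <= s <= tau -> cd a s (da s) /\ cd b s (db s)) ->
  solves_N m al be p q ->
  (forall s, 0 <= s <= tau -> Cmod (a s) <= M /\ Cmod (b s) <= M /\
      Cmod (Cminus (da s) (NL1 m al be (a s) (b s))) <= E /\
      Cmod (Cminus (db s) (NL2 m al be (a s) (b s))) <= E) ->
  Cmod (p 0)^2 + Cmod (q 0)^2 <= K ->
  forall s, 0 <= s <= tau ->
   Cmod (Cminus (a s) (p s))^2 * (1 + Cmod (q s)^2) + Cmod (Cminus (b s) (q s))^2 * (1 + Cmod (p s)^2)
   <= exp (Acst m al be M * (1+K) * s) *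
      ((Cmod (Cminus (a 0) (p 0))^2 * (1 + Cmod (q 0)^2) + Cmod (Cminus (b 0) (q 0))^2 * (1 + Cmod (p 0)^2))
       + (1+K)*(2*E^2) * s).
Proof.
  intros Hm HM HE Hd HN Hb HK.
  assert (K0 : 0 <= K) by (pose proof (pow2_ge_0 (Cmod (p 0))); pose proof (pow2_ge_0 (Cmod (q 0))); lra).
  set (phi := fun s => Cmod (Cminus (a s) (p s))^2 * (1 + Cmod (q s)^2) + Cmod (Cminus (b s) (q s))^2 * (1 + Cmod (p s)^2)).
  set (dphi := fun s =>
    2*ipC (Cminus (a s) (p s)) (Cminus (da s) (NL1 m al be (p s) (q s)))*(1+Cmod (q s)^2)
  + 2*ipC (Cminus (b s) (q s)) (Cminus (db s) (NL2 m al be (p s) (q s)))*(1+Cmod (p s)^2)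
  + Cmod (Cminus (a s) (p s))^2*(2*ipC (q s) (NL2 m al be (p s) (q s)))
  + Cmod (Cminus (b s) (q s))^2*(2*ipC (p s) (NL1 m al be (p s) (q s)))).
  apply (gronwall phi dphi).
  - apply Rmult_le_pos. apply Acst_pos; auto. lra.
  - pose proof (pow2_ge_0 E). nra.
  - intros s Hs. destruct (Hd s Hs) as [Ha Hb']. destruct (HN s) as [Hp Hq].
    unfold phi, dphi.
    apply (Rd_ext _ _ ((2*ipC (Cminus (a s) (p s)) (Cminus (da s) (NL1 m al be (p s) (q s))) * (1 + Cmod (q s)^2)
          + Cmod (Cminus (a s) (p s))^2 * (0 + 2 * ipC (q s) (NL2 m al be (p s) (q s))))
         + (2*ipC (Cminus (b s) (q s)) (Cminus (db s) (NL2 m al be (p s) (q s))) * (1 + Cmod (p s)^2)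
          + Cmod (Cminus (b s) (q s))^2 * (0 + 2 * ipC (p s) (NL1 m al be (p s) (q s)))))).
    2:{ ring. }
    apply (Rd_plus (fun s => Cmod (Cminus (a s) (p s))^2 * (1 + Cmod (q s)^2))
                   (fun s => Cmod (Cminus (b s) (q s))^2 * (1 + Cmod (p s)^2))).
    + apply (Rd_mult (fun s => Cmod (Cminus (a s) (p s))^2) (fun s => 1 + Cmod (q s)^2)).
      * apply (cmod2_deriv (fun s => Cminus (a s) (p s))). apply cd_minus; auto. apply cd_of; auto.
      * apply (Rd_plus (fun _ => 1) (fun s => Cmod (q s)^2)). apply Rd_const.
        apply (cmod2_deriv q). apply cd_of; auto.
    + apply (Rd_mult (fun s => Cmod (Cminus (b s) (q s))^2) (fun s => 1 + Cmod (p s)^2)).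
      * apply (cmod2_deriv (fun s => Cminus (b s) (q s))). apply cd_minus; auto. apply cd_of; auto.
      * apply (Rd_plus (fun _ => 1) (fun s => Cmod (p s)^2)). apply Rd_const.
        apply (cmod2_deriv p). apply cd_of; auto.
  - intros s Hs. destruct (Hb s Hs) as (H1 & H2 & H3 & H4).
    unfold dphi, phi.
    apply pointwise; auto.
    rewrite (conserv _ _ _ _ _ HN s). exact HK.
Qed.

Lemma cmod2_zero_eq (z w : C) : Cmod (Cminus z w)^2 <= 0 -> z = w.
Proof.
  intros H. rewrite Cmod2_alt, Re_minus, Im_minus in H.
  pose proof (pow2_ge_0 (Re z - Re w)). pose proof (pow2_ge_0 (Im z - Im w)).
  destruct z as [z1 z2], w as [w1 w2]. unfold Re, Im in *; simpl in *.
  f_equal; nra.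
Qed.

Lemma le_1_sq x : 0 <= x -> x <= 1 + x^2.
Proof. intros. pose proof (sq2 x 1). nra. Qed.

Lemma ode_unique m al be (u1 v1 u2 v2 : R -> C) :
  0 <= m -> solves_N m al be u1 v1 -> solves_N m al be u2 v2 ->
  u1 0 = u2 0 -> v1 0 = v2 0 -> forall s, 0 <= s -> u1 s = u2 s /\ v1 s = v2 s.
Proof.
  intros Hm H1 H2 E1 E2 s Hs.
  set (K := Cmod (u1 0)^2 + Cmod (v1 0)^2).
  assert (K0 : 0 <= K) by (unfold K; pose proof (pow2_ge_0 (Cmod (u1 0))); pose proof (pow2_ge_0 (Cmod (v1 0))); lra).
  pose proof (main_est m al be (1+K) 0 s K u1 v1 u2 v2
     (fun t => NL1 m al be (u1 t) (v1 t)) (fun t => NL2 m al be (u1 t) (v1 t))) as ME.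
  assert (Hz : forall z, Cmod (Cminus z z) = 0).
  { intros z. replace (Cminus z z) with (RtoC 0). apply Cmod_0.
    destruct z; unfold Cminus, Cplus, Copp, RtoC; simpl; f_equal; ring. }
  specialize (ME Hm ltac:(lra) ltac:(lra)).
  assert (H : forall t, 0 <= t <= s ->
     Cmod (Cminus (u1 t) (u2 t))^2 * (1 + Cmod (v2 t)^2) + Cmod (Cminus (v1 t) (v2 t))^2 * (1 + Cmod (u2 t)^2)
     <= 0).
  { intros t Ht. eapply Rle_trans. apply ME; auto.
    - intros r _. destruct (H1 r). split; apply cd_of; auto.
    - intros r _. pose proof (conserv _ _ _ _ _ H1 r).
      pose proof (pow2_ge_0 (Cmod (u1 r))). pose proof (pow2_ge_0 (Cmod (v1 r))).
      pose proof (le_1_sq _ (Cmod_ge_0 (u1 r))). pose proof (le_1_sq _ (Cmod_ge_0 (v1 r))).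
      fold K in H. rewrite !Hz. repeat split; lra.
    - rewrite <- E1, <- E2. unfold K. lra.
    - rewrite <- E1, <- E2, !Hz. right. ring. }
  specialize (H s ltac:(lra)).
  pose proof (pow2_ge_0 (Cmod (Cminus (u1 s) (u2 s)))). pose proof (pow2_ge_0 (Cmod (Cminus (v1 s) (v2 s)))).
  pose proof (pow2_ge_0 (Cmod (u2 s))). pose proof (pow2_ge_0 (Cmod (v2 s))).
  split; apply cmod2_zero_eq; nra.
Qed.


Lemma lim_eventually (f : R -> C) a L c eps : 0 < eps ->
  filterlim f (at_left a) (locally L) -> (forall t, a - eps < t < a -> f t = c) -> L = c.
Proof.
  intros He Hl Hc.
  apply (filterlim_locally_unique (F := at_left a) f L c Hl).
  apply (filterlim_ext_loc (fun _ => c) f).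
  - exists (mkposreal eps He). intros y Hy Hya. symmetry. apply Hc.
    unfold ball in Hy; simpl in Hy. unfold AbsRing_ball, abs, minus, plus, opp in Hy; simpl in Hy.
    apply Rabs_lt_between in Hy. lra.
  - apply filterlim_const.
Qed.

Lemma sum_le_term (g : nat -> R) n i : (forall k, 0 <= g k) -> (i <= n)%nat -> g i <= sum_f_R0 g n.
Proof.
  intros Hg. induction n; intros Hi.
  - assert (i = 0%nat) by lia. subst. simpl. lra.
  - rewrite tech5. destruct (Nat.eq_dec i (S n)) as [->|Hne].
    + pose proof (cond_pos_sum g n Hg). lra.
    + specialize (IHn ltac:(lia)). pose proof (Hg (S n)). lra.
Qed.

Lemma sum_le_ext (g : nat -> R) n m : (forall k, 0 <= g k) -> (n <= m)%nat -> sum_f_R0 g n <= sum_f_R0 g m.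
Proof.
  intros Hg Hnm. induction Hnm. lra. rewrite tech5. pose proof (Hg (S m)). lra.
Qed.

Lemma sum_shift2 (g : nat -> R) n : (forall k, 0 <= g k) ->
  sum_f_R0 (fun k => g (S (S k))) n <= sum_f_R0 g (S (S n)).
Proof.
  intros Hg. induction n.
  - simpl. pose proof (Hg 0%nat). pose proof (Hg 1%nat). lra.
  - rewrite tech5. rewrite (tech5 g (S (S n))). lra.
Qed.

Lemma sumZ_term (f : Z -> R) N k : (forall k, 0 <= f k) -> (- Z.of_nat N <= k <= Z.of_nat N)%Z ->
  f k <= sumZ_sym f N.
Proof.
  intros Hf Hk. unfold sumZ_sym.
  replace (f k) with ((fun i : nat => f (Z.of_nat i - Z.of_nat N)%Z) (Z.to_nat (k + Z.of_nat N))).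
  apply (sum_le_term (fun i : nat => f (Z.of_nat i - Z.of_nat N)%Z)). intros; apply Hf. lia.
  simpl. f_equal. rewrite Z2Nat.id by lia. lia.
Qed.

Lemma sumZ_shift (G H : Z -> R) N : (forall k, 0 <= G k) -> (forall k, 0 <= H k) ->
  sumZ_sym (fun k => G (k - 1)%Z + H (k + 1)%Z) N <= sumZ_sym (fun k => G k + H k) (S N).
Proof.
  intros HG HH. unfold sumZ_sym. rewrite !sum_plus.
  apply Rplus_le_compat.
  - apply Rle_trans with (sum_f_R0 (fun i => G (Z.of_nat i - Z.of_nat (S N))%Z) (2 * N)).
    + right. apply sum_eq. intros i _. f_equal. lia.
    + apply sum_le_ext. intros; apply HG. lia.
  - apply Rle_trans with (sum_f_R0 (fun k => (fun i => H (Z.of_nat i - Z.of_nat (S N))%Z) (S (S k))) (2 * N)).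
    + right. apply sum_eq. intros i _. f_equal. lia.
    + replace (2 * S N)%nat with (S (S (2 * N))) by lia. apply (sum_shift2 (fun i => H (Z.of_nat i - Z.of_nat (S N))%Z)). intros; apply HH.
Qed.

Definition cellprop (tau : R) (U V : R -> R -> C) (n : nat) (cu cv : Z -> C) :=
  forall k x, IZR k * tau < x < (IZR k + 1) * tau -> U x (INR n * tau) = cu k /\ V x (INR n * tau) = cv k.

Lemma lim_U tau (U V : R -> R -> C) n cu cv x k eps Lu :
  0 < tau -> 0 < eps <= tau ->
  (forall (x t : R), INR n * tau <= t < (INR n + 1) * tau ->
      U x t = U (x - (t - INR n * tau)) (INR n * tau) /\
      V x t = V (x + (t - INR n * tau)) (INR n * tau)) ->
  cellprop tau U V n cu cv ->
  (forall t, (INR n + 1) * tau - eps < t < (INR n + 1) * tau ->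
      IZR k * tau < x - (t - INR n * tau) < (IZR k + 1) * tau) ->
  filterlim (fun t => U x t) (at_left ((INR n + 1) * tau)) (locally Lu) -> Lu = cu k.
Proof.
  intros Ht He HT Hc Hin Hl. apply (lim_eventually _ _ _ _ eps (proj1 He) Hl).
  intros t Ht'. rewrite (proj1 (HT x t ltac:(lra))). apply Hc. apply Hin. lra.
Qed.

Lemma lim_V tau (U V : R -> R -> C) n cu cv x k eps Lv :
  0 < tau -> 0 < eps <= tau ->
  (forall (x t : R), INR n * tau <= t < (INR n + 1) * tau ->
      U x t = U (x - (t - INR n * tau)) (INR n * tau) /\
      V x t = V (x + (t - INR n * tau)) (INR n * tau)) ->
  cellprop tau U V n cu cv ->
  (forall t, (INR n + 1) * tau - eps < t < (INR n + 1) * tau ->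
      IZR k * tau < x + (t - INR n * tau) < (IZR k + 1) * tau) ->
  filterlim (fun t => V x t) (at_left ((INR n + 1) * tau)) (locally Lv) -> Lv = cv k.
Proof.
  intros Ht He HT Hc Hin Hl. apply (lim_eventually _ _ _ _ eps (proj1 He) Hl).
  intros t Ht'. rewrite (proj2 (HT x t ltac:(lra))). apply Hc. apply Hin. lra.
Qed.

Lemma cells m al be tau u0 v0 U V : 0 <= m -> 0 < tau ->
  time_splitting m al be tau u0 v0 U V ->
  forall n : nat, exists cu cv : Z -> C, cellprop tau U V n cu cv /\
    forall N, sumZ_sym (fun k => Cmod (cu k)^2 + Cmod (cv k)^2) N
              <= sumZ_sym (fun k => Cmod (u0 k)^2 + Cmod (v0 k)^2) (N + n).
Proof.
  intros Hm Ht [H1 [H2 H3]]. induction n as [|n IH].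
  - exists u0, v0. split.
    + intros k x Hx. simpl. rewrite Rmult_0_l. apply H1. lra.
    + intros N. rewrite Nat.add_0_r. lra.
  - destruct IH as [cu [cv [Hc Hs]]].
    set (xk := fun k : Z => (IZR k + /2) * tau).
    exists (fun k => U (xk k) (INR (S n) * tau)), (fun k => V (xk k) (INR (S n) * tau)).
    assert (Key : forall k x, IZR k * tau < x < (IZR k + 1) * tau ->
      exists wu wv : R -> C, solves_N m al be wu wv /\ wu 0 = cu (k - 1)%Z /\ wv 0 = cv (k + 1)%Z /\
        U x (INR (S n) * tau) = wu tau /\ V x (INR (S n) * tau) = wv tau).
    { intros k x Hx. destruct (H3 n x) as (Lu & Lv & wu & wv & Hlu & Hlv & HN & E1 & E2 & E3 & E4).
      exists wu, wv. rewrite S_INR. refine (conj HN (conj _ (conj _ (conj E3 E4)))).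
      - rewrite E1. apply (lim_U tau U V n cu cv x (k-1) ((IZR k + 1) * tau - x) Lu); auto.
        + lra.
        + intros t Ht'. rewrite minus_IZR. simpl. nra.
      - rewrite E2. apply (lim_V tau U V n cu cv x (k+1) (x - IZR k * tau) Lv); auto.
        + lra.
        + intros t Ht'. rewrite plus_IZR. simpl. nra. }
    assert (Hxk : forall k, IZR k * tau < xk k < (IZR k + 1) * tau) by (intros; unfold xk; nra).
    split.
    + intros k x Hx.
      destruct (Key k x Hx) as (wu & wv & HN & E1 & E2 & E3 & E4).
      destruct (Key k (xk k) (Hxk k)) as (wu' & wv' & HN' & E1' & E2' & E3' & E4').
      rewrite E3, E4, E3', E4'.
      destruct (ode_unique m al be wu wv wu' wv' Hm HN HN' ltac:(congruence) ltac:(congruence) tau ltac:(lra)).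
      split; auto.
    + intros N.
      eapply Rle_trans with (sumZ_sym (fun k => Cmod (cu (k-1)%Z)^2 + Cmod (cv (k+1)%Z)^2) N).
      * right. unfold sumZ_sym. apply sum_eq. intros i _.
        set (k := (Z.of_nat i - Z.of_nat N)%Z).
        destruct (Key k (xk k) (Hxk k)) as (wu & wv & HN & E1 & E2 & E3 & E4).
        rewrite E3, E4, (conserv _ _ _ _ _ HN tau), E1, E2. reflexivity.
      * eapply Rle_trans. apply (sumZ_shift (fun k => Cmod (cu k)^2) (fun k => Cmod (cv k)^2)).
        intros; apply pow2_ge_0. intros; apply pow2_ge_0.
        replace (N + S n)%nat with (S N + n)%nat by lia. apply Hs.
Qed.


Definition Lc (m al be M : R) := m + 2 * Rabs al * M^2 + 8 * Rabs be * M^2.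

Lemma Cmod_RC r z : Cmod (Cmult (RtoC r) z) = Rabs r * Cmod z.
Proof. rewrite Cmod_mult, Cmod_R. reflexivity. Qed.

Lemma lip1 m al be M (u v v' : C) : 0 <= m -> 0 <= M -> Cmod u <= M -> Cmod v <= M -> Cmod v' <= M ->
  Cmod (Cminus (NL1 m al be u v') (NL1 m al be u v)) <= Lc m al be M * Cmod (Cminus v' v).
Proof.
  intros Hm HM Hu Hv Hv'.
  set (d := Cminus v' v).
  assert (Eq : Cminus (NL1 m al be u v') (NL1 m al be u v) =
    Cmult Ci (Cplus (Cplus (Cplus (Cmult (RtoC m) d) (Cmult (RtoC (al * ipC d (Cplus v' v))) u))
       (Cmult (RtoC (2 * be * (2 * ipC u v'))) d)) (Cmult (RtoC (2 * be * (2 * ipC u d))) v))).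
  { unfold d. apply injective_projections;
    [change (Re (Cminus (NL1 m al be u v') (NL1 m al be u v)) = Re (Cmult Ci (Cplus (Cplus (Cplus (Cmult (RtoC m) (Cminus v' v)) (Cmult (RtoC (al * ipC (Cminus v' v) (Cplus v' v))) u))
       (Cmult (RtoC (2 * be * (2 * ipC u v'))) (Cminus v' v))) (Cmult (RtoC (2 * be * (2 * ipC u (Cminus v' v)))) v))))
    |change (Im (Cminus (NL1 m al be u v') (NL1 m al be u v)) = Im (Cmult Ci (Cplus (Cplus (Cplus (Cmult (RtoC m) (Cminus v' v)) (Cmult (RtoC (al * ipC (Cminus v' v) (Cplus v' v))) u))
       (Cmult (RtoC (2 * be * (2 * ipC u v'))) (Cminus v' v))) (Cmult (RtoC (2 * be * (2 * ipC u (Cminus v' v)))) v))))];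
    rewrite ?Re_minus, ?Im_minus, ?NL1_re, ?NL1_im; unfold ipC, Re, Im; simpl; ring. }
  rewrite Eq, Cmod_mult, Cmod_Ci, Rmult_1_l.
  assert (HD : 0 <= Cmod d) by apply Cmod_ge_0.
  assert (Hu0 : 0 <= Cmod u) by apply Cmod_ge_0.
  assert (Hv0 : 0 <= Cmod v) by apply Cmod_ge_0.
  pose proof (ipC_bound d (Cplus v' v)) as B1.
  pose proof (Cmod_triangle v' v) as T1.
  pose proof (ipC_bound u v') as B2.
  pose proof (ipC_bound u d) as B3.
  assert (C1 : Rabs (al * ipC d (Cplus v' v)) * Cmod u <= Rabs al * (Cmod d * (2*M)) * M).
  { rewrite Rabs_mult. apply mono; [apply Rmult_le_pos; apply Rabs_pos| |auto|auto].
    apply mono_l. apply Rabs_pos. eapply Rle_trans. apply B1. apply mono_l; auto. lra. }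
  assert (C2 : Rabs (2 * be * (2 * ipC u v')) <= 4 * Rabs be * (M*M)).
  { rewrite !Rabs_mult, !(Rabs_pos_eq 2) by lra.
    assert (Rabs (ipC u v') <= M*M).
    { eapply Rle_trans. apply B2. apply mono; auto. apply Cmod_ge_0. }
    pose proof (Rabs_pos be). nra. }
  assert (C3 : Rabs (2 * be * (2 * ipC u d)) * Cmod v <= 4 * Rabs be * (M * Cmod d) * M).
  { rewrite !Rabs_mult, !(Rabs_pos_eq 2) by lra.
    assert (Rabs (ipC u d) <= M * Cmod d).
    { eapply Rle_trans. apply B3. apply Rmult_le_compat_r; auto. }
    pose proof (Rabs_pos be). pose proof (Rabs_pos (ipC u d)).
    apply mono; [nra|nra|auto|auto]. }
  eapply Rle_trans. apply Cmod_triangle. rewrite !Cmod_RC.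
  eapply Rle_trans. apply Rplus_le_compat_r. apply Cmod_triangle. rewrite !Cmod_RC.
  eapply Rle_trans. apply Rplus_le_compat_r. apply Rplus_le_compat_r. apply Cmod_triangle. rewrite !Cmod_RC.
  rewrite (Rabs_pos_eq m) by auto.
  assert (C2' : Rabs (2 * be * (2 * ipC u v')) * Cmod d <= 4 * Rabs be * (M*M) * Cmod d)
    by (apply Rmult_le_compat_r; auto).
  unfold Lc. fold d. nra.
Qed.

Lemma lip2 m al be M (u u' v : C) : 0 <= m -> 0 <= M -> Cmod u <= M -> Cmod v <= M -> Cmod u' <= M ->
  Cmod (Cminus (NL2 m al be u' v) (NL2 m al be u v)) <= Lc m al be M * Cmod (Cminus u' u).
Proof.
  intros Hm HM Hu Hv Hv'.
  set (d := Cminus u' u).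
  assert (Eq : Cminus (NL2 m al be u' v) (NL2 m al be u v) =
    Cmult Ci (Cplus (Cplus (Cplus (Cmult (RtoC m) d) (Cmult (RtoC (al * ipC d (Cplus u' u))) v))
       (Cmult (RtoC (2 * be * (2 * ipC u' v))) d)) (Cmult (RtoC (2 * be * (2 * ipC d v))) u))).
  { unfold d. apply injective_projections;
    [change (Re (Cminus (NL2 m al be u' v) (NL2 m al be u v)) = Re (Cmult Ci (Cplus (Cplus (Cplus (Cmult (RtoC m) (Cminus u' u)) (Cmult (RtoC (al * ipC (Cminus u' u) (Cplus u' u))) v))
       (Cmult (RtoC (2 * be * (2 * ipC u' v))) (Cminus u' u))) (Cmult (RtoC (2 * be * (2 * ipC (Cminus u' u) v))) u))))
    |change (Im (Cminus (NL2 m al be u' v) (NL2 m al be u v)) = Im (Cmult Ci (Cplus (Cplus (Cplus (Cmult (RtoC m) (Cminus u' u)) (Cmult (RtoC (al * ipC (Cminus u' u) (Cplus u' u))) v))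
       (Cmult (RtoC (2 * be * (2 * ipC u' v))) (Cminus u' u))) (Cmult (RtoC (2 * be * (2 * ipC (Cminus u' u) v))) u))))];
    rewrite ?Re_minus, ?Im_minus, ?NL2_re, ?NL2_im; unfold ipC, Re, Im; simpl; ring. }
  rewrite Eq, Cmod_mult, Cmod_Ci, Rmult_1_l.
  assert (HD : 0 <= Cmod d) by apply Cmod_ge_0.
  assert (Hu0 : 0 <= Cmod u) by apply Cmod_ge_0.
  assert (Hv0 : 0 <= Cmod v) by apply Cmod_ge_0.
  pose proof (ipC_bound d (Cplus u' u)) as B1.
  pose proof (Cmod_triangle u' u) as T1.
  pose proof (ipC_bound u' v) as B2.
  pose proof (ipC_bound d v) as B3.
  assert (C1 : Rabs (al * ipC d (Cplus u' u)) * Cmod v <= Rabs al * (Cmod d * (2*M)) * M).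
  { rewrite Rabs_mult. apply mono; [apply Rmult_le_pos; apply Rabs_pos| |auto|auto].
    apply mono_l. apply Rabs_pos. eapply Rle_trans. apply B1. apply mono_l; auto. lra. }
  assert (C2 : Rabs (2 * be * (2 * ipC u' v)) <= 4 * Rabs be * (M*M)).
  { rewrite !Rabs_mult, !(Rabs_pos_eq 2) by lra.
    assert (Rabs (ipC u' v) <= M*M).
    { eapply Rle_trans. apply B2. apply mono; auto. apply Cmod_ge_0. }
    pose proof (Rabs_pos be). nra. }
  assert (C3 : Rabs (2 * be * (2 * ipC d v)) * Cmod u <= 4 * Rabs be * (M * Cmod d) * M).
  { rewrite !Rabs_mult, !(Rabs_pos_eq 2) by lra.
    assert (Rabs (ipC d v) <= M * Cmod d).
    { eapply Rle_trans. apply B3. rewrite Rmult_comm. apply Rmult_le_compat_r; auto. }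
    pose proof (Rabs_pos be). pose proof (Rabs_pos (ipC d v)).
    apply mono; [nra|nra|auto|auto]. }
  eapply Rle_trans. apply Cmod_triangle. rewrite !Cmod_RC.
  eapply Rle_trans. apply Rplus_le_compat_r. apply Cmod_triangle. rewrite !Cmod_RC.
  eapply Rle_trans. apply Rplus_le_compat_r. apply Rplus_le_compat_r. apply Cmod_triangle. rewrite !Cmod_RC.
  rewrite (Rabs_pos_eq m) by auto.
  assert (C2' : Rabs (2 * be * (2 * ipC u' v)) * Cmod d <= 4 * Rabs be * (M*M) * Cmod d)
    by (apply Rmult_le_compat_r; auto).
  unfold Lc. fold d. nra.
Qed.


Lemma chain_comp (pr : C -> R) (f fx ft : R -> R -> C) x0 t0 cx ct s :
  (forall z : C, continuous pr z) ->
  (forall (g : R -> C) x l, is_derive g x l -> is_derive (fun t => pr (g t)) x (pr l)) ->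
  smooth2 f ->
  (forall x t, is_derive (fun y => f y t) x (fx x t) /\ is_derive (fun s => f x s) t (ft x t)) ->
  is_derive (fun s => pr (f (x0 + cx*s) (t0 + ct*s))) s
    (cx * pr (fx (x0+cx*s) (t0+ct*s)) + ct * pr (ft (x0+cx*s) (t0+ct*s))).
Proof.
  intros Hpc Hpd [D [HD0 HD]] Hd.
  set (X := x0 + cx*s). set (T := t0 + ct*s).
  set (g := fun x t => pr (f x t)).
  assert (Heq : forall x t, pr (D 1%nat 0%nat x t) = pr (fx x t)).
  { intros x t. destruct (HD 0%nat 0%nat x t) as [H1 _]. rewrite HD0 in H1.
    apply Hpd in H1. pose proof (Hpd _ _ _ (proj1 (Hd x t))) as H2.
    apply is_derive_unique in H1. apply is_derive_unique in H2. congruence. }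
  assert (Hcont : continuous (fun u : R * R => pr (fx (fst u) (snd u))) (X, T)).
  { apply (continuous_ext (fun u : R * R => pr (D 1%nat 0%nat (fst u) (snd u)))).
    intros; apply Heq.
    apply (continuous_comp (fun u : R * R => D 1%nat 0%nat (fst u) (snd u)) pr).
    apply HD. apply Hpc. }
  assert (Hfd := is_derive_filterdiff g X T (fun x t => pr (fx x t)) (pr (ft X T))).
  assert (Hdiff : differentiable_pt_lim g X T (pr (fx X T)) (pr (ft X T))).
  { apply filterdiff_differentiable_pt_lim. apply Hfd.
    - apply filter_forall. intros u. unfold g. apply Hpd. apply Hd.
    - unfold g. apply Hpd. apply Hd.
    - exact Hcont. }
  apply is_derive_Reals.
  replace (cx * pr (fx X T) + ct * pr (ft X T)) with (pr (fx X T) * cx + pr (ft X T) * ct) by ring.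
  apply (derivable_pt_lim_comp_2d g (fun s => x0 + cx*s) (fun s => t0 + ct*s)).
  - exact Hdiff.
  - apply is_derive_Reals. auto_derive; auto; ring.
  - apply is_derive_Reals. auto_derive; auto; ring.
Qed.

Lemma chain_cd (f fx ft : R -> R -> C) x0 t0 cx ct s l :
  smooth2 f ->
  (forall x t, is_derive (fun y => f y t) x (fx x t) /\ is_derive (fun s => f x s) t (ft x t)) ->
  Re l = cx * Re (fx (x0+cx*s) (t0+ct*s)) + ct * Re (ft (x0+cx*s) (t0+ct*s)) ->
  Im l = cx * Im (fx (x0+cx*s) (t0+ct*s)) + ct * Im (ft (x0+cx*s) (t0+ct*s)) ->
  cd (fun s => f (x0 + cx*s) (t0 + ct*s)) s l.
Proof.
  intros Hs Hd E1 E2. split.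
  - rewrite E1. apply (chain_comp Re); auto.
    + intros [z1 z2]. apply continuous_fst.
    + intros g x l' H. apply (proj1 (cd_of g x l' H)).
  - rewrite E2. apply (chain_comp Im); auto.
    + intros [z1 z2]. apply continuous_snd.
    + intros g x l' H. apply (proj2 (cd_of g x l' H)).
Qed.

Lemma Cmod_le_sum z : Cmod z <= Rabs (Re z) + Rabs (Im z).
Proof.
  rewrite <- (Rabs_pos_eq (Cmod z)) by apply Cmod_ge_0.
  rewrite <- (Rabs_pos_eq (Rabs (Re z) + Rabs (Im z))) by (pose proof (Rabs_pos (Re z)); pose proof (Rabs_pos (Im z)); lra).
  apply Rsqr_le_abs_0. unfold Rsqr.
  pose proof (Cmod2_alt z). simpl in H.
  pose proof (Rabs_pos (Re z)); pose proof (Rabs_pos (Im z)).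
  assert (Re z * Re z = Rabs (Re z) * Rabs (Re z)) by (rewrite <- Rabs_mult; rewrite Rabs_pos_eq; nra).
  assert (Im z * Im z = Rabs (Im z) * Rabs (Im z)) by (rewrite <- Rabs_mult; rewrite Rabs_pos_eq; nra).
  nra.
Qed.

Lemma mvt_real (g dg : R -> R) x1 x2 B : (forall x, is_derive g x (dg x)) -> (forall x, Rabs (dg x) <= B) ->
  Rabs (g x1 - g x2) <= B * Rabs (x1 - x2).
Proof.
  intros Hd Hb.
  destruct (MVT_gen g x2 x1 dg) as [c [_ Hc]].
  - intros; apply Hd.
  - intros x _. apply derivable_continuous_pt. exists (dg x). apply is_derive_Reals. apply Hd.
  - rewrite Hc, Rabs_mult. apply Rmult_le_compat_r. apply Rabs_pos. apply Hb.
Qed.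

Lemma mvt_x (f fx : R -> R -> C) t x1 x2 B :
  (forall x, is_derive (fun y => f y t) x (fx x t)) -> (forall x, Cmod (fx x t) <= B) ->
  Cmod (Cminus (f x1 t) (f x2 t)) <= 2 * B * Rabs (x1 - x2).
Proof.
  intros Hd Hb.
  eapply Rle_trans. apply Cmod_le_sum. rewrite Re_minus, Im_minus.
  assert (A1 : Rabs (Re (f x1 t) - Re (f x2 t)) <= B * Rabs (x1 - x2)).
  { apply (mvt_real (fun y => Re (f y t)) (fun y => Re (fx y t))).
    intros x. apply (proj1 (cd_of _ _ _ (Hd x))).
    intros x. eapply Rle_trans. apply re_le_Cmod. apply Hb. }
  assert (A2 : Rabs (Im (f x1 t) - Im (f x2 t)) <= B * Rabs (x1 - x2)).
  { apply (mvt_real (fun y => Im (f y t)) (fun y => Im (fx y t))).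
    intros x. apply (proj2 (cd_of _ _ _ (Hd x))).
    intros x. eapply Rle_trans. 2: apply Hb. eapply Rle_trans. 2: apply Rmax_Cmod. apply Rmax_r. }
  lra.
Qed.


Lemma cd_ext (f g : R -> C) s l : (forall t, f t = g t) -> cd f s l -> cd g s l.
Proof.
  intros H [H1 H2]. split.
  - apply (Rd_extf (fun t => Re (f t))). intros t; rewrite H; reflexivity. exact H1.
  - apply (Rd_extf (fun t => Im (f t))). intros t; rewrite H; reflexivity. exact H2.
Qed.

Lemma exp_le x y : x <= y -> exp x <= exp y.
Proof. intros [H|H]. left; apply exp_increasing; auto. subst; lra. Qed.

Theorem lemma4p3 :
  forall (m alpha beta c0 M0 MM : R),
    0 <= m -> 0 < c0 ->
    exists C2 C3 : R, 0 < C2 /\ 0 < C3 /\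
    forall (T : R) (uh vh uhx uht vhx vht : R -> R -> C),
      0 < T ->
      smooth2 uh -> smooth2 vh ->
      (forall x t, is_derive (fun y => uh y t) x (uhx x t) /\
                   is_derive (fun s => uh x s) t (uht x t) /\
                   is_derive (fun y => vh y t) x (vhx x t) /\
                   is_derive (fun s => vh x s) t (vht x t)) ->
      (forall x t, 0 <= t <= T ->
         Cplus (uht x t) (uhx x t) = NL1 m alpha beta (uh x t) (vh x t) /\
         Cminus (vht x t) (vhx x t) = NL2 m alpha beta (uh x t) (vh x t)) ->
      is_lub (fun y => exists x t, 0 <= t <= T /\
                y = Cmod (uh x t) + Cmod (vh x t) + 1) M0 ->
      is_lub (fun y => exists x t, 0 <= t <= T /\
                y = Cmod (uht x t) + Cmod (uhx x t) + Cmod (vht x t)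
                    + Cmod (vhx x t) + 1) MM ->
      forall (tau : R) (u0 v0 : Z -> C) (U V : R -> R -> C),
        0 < tau < 1 ->
        (forall N : nat,
           sumZ_sym (fun j => Cmod (u0 j) ^ 2 + Cmod (v0 j) ^ 2) N * tau <= c0) ->
        time_splitting m alpha beta tau u0 v0 U V ->
        forall (j : Z) (n : nat) (Lu Lv : C) (wu wv : R -> C),
          (INR n + 1) * tau <= T ->
          filterlim (fun t => U ((IZR j + 1) * tau) t)
                    (at_left ((INR n + 1) * tau)) (locally Lu) ->
          filterlim (fun t => V ((IZR j + 1) * tau) t)
                    (at_left ((INR n + 1) * tau)) (locally Lv) ->
          solves_N m alpha beta wu wv -> wu 0 = Lu -> wv 0 = Lv ->
          let cU := fun s => Cminus (uh (IZR j * tau + s) (INR n * tau + s)) (wu s) in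
          let cV := fun s => Cminus (vh ((IZR j + 2) * tau - s) (INR n * tau + s)) (wv s) in
          let cL := fun s => Cmod (cU s) ^ 2 + Cmod (cV s) ^ 2 in
          let cD := fun s => Cmod (cU s) ^ 2 * Cmod (wv s) ^ 2
                             + Cmod (cV s) ^ 2 * Cmod (wu s) ^ 2 in
          forall s : R, 0 <= s <= tau ->
            cL s + cD s <= C2 * (cL 0 + cD 0) + C3 * MM ^ 2 * tau.
Proof.
  intros m al be c0 M0 MM Hm Hc0.
  set (M := Rabs M0).
  set (A := Acst m al be M).
  set (L := Lc m al be M).
  assert (HM : 0 <= M) by apply Rabs_pos.
  assert (HA : 0 <= A) by (apply Acst_pos; auto).
  assert (HL : 0 <= L) by (unfold L, Lc; pose proof (Rabs_pos al); pose proof (Rabs_pos be);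
     pose proof (pow2_ge_0 M); nra).
  set (C2 := exp (A * (1 + 2*c0))).
  set (C3 := C2 * (1 + 2*c0) * (32 * L^2) + 1).
  assert (HC2 : 0 < C2) by apply exp_pos.
  assert (HC3 : 0 < C3).
  { unfold C3. pose proof (pow2_ge_0 L). assert (0 <= C2 * (1 + 2*c0) * (32 * L^2)).
    { apply Rmult_le_pos. apply Rmult_le_pos; lra. lra. } lra. }
  exists C2, C3. split; [exact HC2|]. split; [exact HC3|].
  intros T uh vh uhx uht vhx vht HT Suh Svh Hder Hpde Hlub0 Hlub1 tau u0 v0 U V Htau Hsum HTS
    j n Lu Lv wu wv HnT Hlu Hlv HN Hw0u Hw0v cU cV cL cD s Hs.
  assert (Hn0 : 0 <= INR n) by apply pos_INR.
  assert (Bd0 : forall x t, 0 <= t <= T -> Cmod (uh x t) <= M /\ Cmod (vh x t) <= M).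
  { intros x t Ht. destruct Hlub0 as [Hub _].
    assert (H := Hub (Cmod (uh x t) + Cmod (vh x t) + 1) (ex_intro _ x (ex_intro _ t (conj Ht eq_refl)))).
    pose proof (Cmod_ge_0 (uh x t)). pose proof (Cmod_ge_0 (vh x t)).
    pose proof (Rle_abs M0). fold M in H2. split; lra. }
  assert (Bd1 : forall x t, 0 <= t <= T -> Cmod (uhx x t) <= MM /\ Cmod (vhx x t) <= MM).
  { intros x t Ht. destruct Hlub1 as [Hub _].
    assert (H := Hub _ (ex_intro _ x (ex_intro _ t (conj Ht eq_refl)))).
    pose proof (Cmod_ge_0 (uhx x t)). pose proof (Cmod_ge_0 (vhx x t)).
    pose proof (Cmod_ge_0 (uht x t)). pose proof (Cmod_ge_0 (vht x t)). split; lra. }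
  assert (HMM : 0 <= MM).
  { destruct (Bd1 0 0 ltac:(lra)) as [H _]. pose proof (Cmod_ge_0 (uhx 0 0)). lra. }
  set (K := 2 * c0 / tau).
  assert (HK : Cmod (wu 0)^2 + Cmod (wv 0)^2 <= K).
  { destruct (cells m al be tau u0 v0 U V Hm ltac:(lra) HTS n) as [cu [cv [Hc Hs']]].
    destruct HTS as [H1 [H2 H3]].
    assert (E1 : Lu = cu j).
    { apply (lim_U tau U V n cu cv ((IZR j + 1) * tau) j tau Lu); auto; try lra.
      intros t Ht. lra. }
    assert (E2 : Lv = cv (j + 1)%Z).
    { apply (lim_V tau U V n cu cv ((IZR j + 1) * tau) (j+1) tau Lv); auto; try lra.
      intros t Ht. rewrite plus_IZR. simpl. lra. }
    rewrite Hw0u, Hw0v, E1, E2.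
    set (F := fun k => Cmod (cu k)^2 + Cmod (cv k)^2).
    set (N := Z.to_nat (Z.abs j + 1)).
    assert (HF : forall k, 0 <= F k) by (intros; unfold F; pose proof (pow2_ge_0 (Cmod (cu k))); pose proof (pow2_ge_0 (Cmod (cv k))); lra).
    assert (S1 : F j <= sumZ_sym F N) by (apply sumZ_term; auto; unfold N; lia).
    assert (S2 : F (j+1)%Z <= sumZ_sym F N) by (apply sumZ_term; auto; unfold N; lia).
    assert (S3 : sumZ_sym F N * tau <= c0).
    { eapply Rle_trans. apply Rmult_le_compat_r. lra. apply Hs'. apply Hsum. }
    assert (S4 : sumZ_sym F N <= c0 / tau).
    { apply (Rmult_le_reg_r tau). lra. unfold Rdiv. rewrite Rmult_assoc, Rinv_l by lra. lra. }
    unfold F in S1, S2. pose proof (pow2_ge_0 (Cmod (cu j))). pose proof (pow2_ge_0 (Cmod (cv (j+1)%Z))).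
    pose proof (pow2_ge_0 (Cmod (cv j))). pose proof (pow2_ge_0 (Cmod (cu (j+1)%Z))).
    unfold F in S4. unfold K. unfold Rdiv in *. lra. }
  assert (HK0 : 0 <= K) by (unfold K; apply Rmult_le_pos; [lra| left; apply Rinv_0_lt_compat; lra]).
  assert (HKt : (1 + K) * tau = tau + 2 * c0) by (unfold K; field; lra).
  set (E := 4 * L * MM * tau).
  assert (HE : 0 <= E) by (unfold E; apply Rmult_le_pos; [nra|lra]).
  set (a := fun s => uh (IZR j * tau + s) (INR n * tau + s)).
  set (b := fun s => vh ((IZR j + 2) * tau - s) (INR n * tau + s)).
  set (da := fun s => Cplus (uht (IZR j * tau + s) (INR n * tau + s)) (uhx (IZR j * tau + s) (INR n * tau + s))).
  set (db := fun s => Cminus (vht ((IZR j + 2) * tau - s) (INR n * tau + s)) (vhx ((IZR j + 2) * tau - s) (INR n * tau + s))).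
  assert (ME := main_est m al be M E tau K a b wu wv da db Hm HM HE).
  assert (Hdu : forall x t, is_derive (fun y => uh y t) x (uhx x t) /\ is_derive (fun s => uh x s) t (uht x t))
    by (intros x t; destruct (Hder x t) as (h1 & h2 & h3 & h4); auto).
  assert (Hdv : forall x t, is_derive (fun y => vh y t) x (vhx x t) /\ is_derive (fun s => vh x s) t (vht x t))
    by (intros x t; destruct (Hder x t) as (h1 & h2 & h3 & h4); auto).
  assert (Hcd : forall r, 0 <= r <= tau -> cd a r (da r) /\ cd b r (db r)).
  { intros r Hr. split.
    - apply (cd_ext (fun r => uh (IZR j * tau + 1 * r) (INR n * tau + 1 * r))).
      { intros t; unfold a; rewrite !Rmult_1_l; reflexivity. }
      apply (chain_cd uh uhx uht (IZR j * tau) (INR n * tau) 1 1 r (da r)); auto;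
        rewrite !Rmult_1_l; unfold da; rewrite ?Re_plus, ?Im_plus; ring.
    - apply (cd_ext (fun r => vh ((IZR j + 2) * tau + -1 * r) (INR n * tau + 1 * r))).
      { intros t; unfold b; rewrite !Rmult_1_l.
        replace ((IZR j + 2) * tau + -1 * t) with ((IZR j + 2) * tau - t) by ring. reflexivity. }
      apply (chain_cd vh vhx vht ((IZR j + 2) * tau) (INR n * tau) (-1) 1 r (db r)); auto;
        rewrite !Rmult_1_l; replace ((IZR j + 2) * tau + -1 * r) with ((IZR j + 2) * tau - r) by ring;
        unfold db; rewrite ?Re_minus, ?Im_minus; ring. }
  assert (Hbd : forall r, 0 <= r <= tau -> Cmod (a r) <= M /\ Cmod (b r) <= M /\
      Cmod (Cminus (da r) (NL1 m al be (a r) (b r))) <= E /\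
      Cmod (Cminus (db r) (NL2 m al be (a r) (b r))) <= E).
  { intros r Hr.
    set (X1 := IZR j * tau + r). set (X2 := (IZR j + 2) * tau - r). set (T1 := INR n * tau + r).
    assert (HT1 : 0 <= T1 <= T).
    { unfold T1. assert (0 <= INR n * tau) by (apply Rmult_le_pos; lra). lra. }
    assert (HX : Rabs (X1 - X2) <= 2 * tau).
    { unfold X1, X2. apply Rabs_le. lra. }
    assert (HX' : Rabs (X2 - X1) <= 2 * tau).
    { unfold X1, X2. apply Rabs_le. lra. }
    destruct (Bd0 X1 T1 HT1) as [Ba1 Bb1]. destruct (Bd0 X2 T1 HT1) as [Ba2 Bb2].
    destruct (Hpde X1 T1 HT1) as [P1 _]. destruct (Hpde X2 T1 HT1) as [_ P2].
    assert (Mv : Cmod (Cminus (vh X1 T1) (vh X2 T1)) <= 2 * MM * Rabs (X1 - X2)).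
    { apply (mvt_x vh vhx). intros x; apply Hdv. intros x; apply (Bd1 x T1 HT1). }
    assert (Mu : Cmod (Cminus (uh X2 T1) (uh X1 T1)) <= 2 * MM * Rabs (X2 - X1)).
    { apply (mvt_x uh uhx). intros x; apply Hdu. intros x; apply (Bd1 x T1 HT1). }
    assert (HE' : L * (2 * MM * (2 * tau)) = E) by (unfold E; ring).
    split; [exact Ba1|]. split; [exact Bb2|]. split.
    - change (da r) with (Cplus (uht X1 T1) (uhx X1 T1)). rewrite P1.
      change (a r) with (uh X1 T1). change (b r) with (vh X2 T1).
      eapply Rle_trans. apply (lip1 m al be M); auto.
      fold L. rewrite <- HE'. apply mono_l; auto.
      eapply Rle_trans. apply Mv. apply mono_l. lra. exact HX.
    - change (db r) with (Cminus (vht X2 T1) (vhx X2 T1)). rewrite P2.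
      change (a r) with (uh X1 T1). change (b r) with (vh X2 T1).
      eapply Rle_trans. apply (lip2 m al be M); auto.
      fold L. rewrite <- HE'. apply mono_l; auto.
      eapply Rle_trans. apply Mu. apply mono_l. lra. exact HX'. }
  assert (Hfin := ME Hcd HN Hbd HK s Hs).
  fold A in Hfin.
  assert (Eq1 : cL s + cD s = Cmod (Cminus (a s) (wu s)) ^ 2 * (1 + Cmod (wv s) ^ 2) +
      Cmod (Cminus (b s) (wv s)) ^ 2 * (1 + Cmod (wu s) ^ 2)) by (unfold cL, cD, cU, cV, a, b; ring).
  assert (Eq0 : cL 0 + cD 0 = Cmod (Cminus (a 0) (wu 0)) ^ 2 * (1 + Cmod (wv 0) ^ 2) +
      Cmod (Cminus (b 0) (wv 0)) ^ 2 * (1 + Cmod (wu 0) ^ 2)) by (unfold cL, cD, cU, cV, a, b; ring).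
  rewrite Eq1, Eq0. clear Eq0 Eq1.
  set (P0 := Cmod (Cminus (a 0) (wu 0)) ^ 2 * (1 + Cmod (wv 0) ^ 2) +
      Cmod (Cminus (b 0) (wv 0)) ^ 2 * (1 + Cmod (wu 0) ^ 2)) in *.
  assert (HP0 : 0 <= P0).
  { unfold P0. pose proof (pow2_ge_0 (Cmod (Cminus (a 0) (wu 0)))). pose proof (pow2_ge_0 (Cmod (Cminus (b 0) (wv 0)))).
    pose proof (pow2_ge_0 (Cmod (wu 0))). pose proof (pow2_ge_0 (Cmod (wv 0))). nra. }
  assert (Hks : (1 + K) * s <= 1 + 2 * c0) by nra.
  assert (Hexp : exp (A * (1 + K) * s) <= C2).
  { unfold C2. apply exp_le. rewrite Rmult_assoc. apply mono_l; auto. }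
  assert (Hx : (1 + K) * (2 * E ^ 2) * s <= (1 + 2 * c0) * (32 * L^2) * (MM^2 * tau)).
  { replace ((1 + K) * (2 * E ^ 2) * s) with (((1 + K) * s) * (32 * L^2 * MM^2 * tau^2)) by (unfold E; ring).
    assert (0 <= 32 * L^2 * MM^2) by (pose proof (pow2_ge_0 L); pose proof (pow2_ge_0 MM); nra).
    assert (tau^2 <= tau) by nra.
    assert (0 <= (1+K)*s) by nra.
    apply Rle_trans with ((1 + 2*c0) * (32 * L^2 * MM^2 * tau^2)).
    apply Rmult_le_compat_r; nra.
    assert (0 <= 1 + 2*c0) by lra.
    replace ((1 + 2 * c0) * (32 * L ^ 2) * (MM ^ 2 * tau)) with ((1 + 2*c0) * (32 * L^2 * MM^2 * tau)) by ring.
    apply mono_l; auto. apply mono_l; auto. }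
  assert (Hx0 : 0 <= (1 + K) * (2 * E ^ 2) * s) by (pose proof (pow2_ge_0 E); apply Rmult_le_pos; [apply Rmult_le_pos|]; lra).
  eapply Rle_trans. exact Hfin.
  eapply Rle_trans. apply Rmult_le_compat_r. lra. exact Hexp.
  assert (0 <= MM^2 * tau) by (pose proof (pow2_ge_0 MM); nra).
  assert (C2 * ((1 + K) * (2 * E ^ 2) * s) <= C2 * ((1 + 2 * c0) * (32 * L^2) * (MM^2 * tau)))
    by (apply mono_l; lra).
  unfold C3. nra.
Qed.
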